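(* Let $U$ be a complete length $\mathrm{CAT}(\kappa)$ space, $\lambda\in\mathbb{R}$, $s\ge0$. Let $f_t$ and $h_t$ be two families of $\lambda$-concave functions with a common domain $\Omega\subset U\times\mathbb{R}$ (open), such that $|f_t(x)-h_t(x)|\le s$ for all $(x,t)\in\Omega$. Let $\alpha$ and $\beta$ be an $f_t$-gradient curve and an $h_t$-gradient curve, respectively, defined on a common interval $[a,b)$, and set $\ell(t)=|\alpha(t)-\beta(t)|$. Assume that for every $t\in[a,b)$ some minimizing geodesic $[\alpha(t)\beta(t)]$ lies in $\{x\in U:(x,t)\in\Omega\}$. Then at every $t$ where $\ell'(t)$ exists and $\ell(t)>0$, $\ell'(t)\le\lambda\,\ell(t)+2s/\ell(t)$, and, if $\lambda\ne0$, for all $t\in[a,b)$ $\ell(t)^2+\tfrac{2s}{\lambda}\le\bigl(\ell(a)^2+\tfrac{2s}{\lambda}\bigr)e^{2\lambda(t-a)}$. In particular, if $f_t=h_t$ (so $s=0$), then $\ell(t)\le\ell(a)\,e^{\lambda(t-a)}$ for all $t\in[a,b)$.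
   Context: A function $f$ is $\lambda$-concave if $s\mapsto f(\sigma(s))-\tfrac\lambda2 s^2$ is concave along every unit-speed geodesic $\sigma$ in its domain; a family $f_t$ is $\lambda$-concave if each $f_t$ is. For $q\in U$, $T_q$ is the tangent cone, $\uparrow_q^p\in T_q$ the unit direction of a geodesic $[qp]$, and $d_qf(\uparrow_q^p)$ the right derivative at $0$ of $f$ along the unit-speed geodesic from $q$ to $p$. Given functions $f_t$ on open sets $\mathrm{Dom}f_t$ with $\{(x,t):x\in\mathrm{Dom}f_t\}$ open, a Lipschitz curve $\alpha$ is an $f_t$-gradient curve if for every point $p$ and time $t$ for which a geodesic $[\alpha(t)\,p]$ exists, $|p-\alpha(t+\epsilon)|\le|p-\alpha(t)|-\epsilon\cdot d_{\alpha(t)}f_t(\uparrow_{\alpha(t)}^p)+o(\epsilon)$ as $\epsilon\to0^+$. *)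

(* Defs.v *)
From Stdlib Require Import Reals Lra Sorting.Sorted List.
Open Scope R_scope.

Section Metric.
Context {U : Type} (d : U -> U -> R).

Definition is_metric : Prop :=
  (forall x y, 0 <= d x y) /\ (forall x y, d x y = 0 <-> x = y) /\
  (forall x y, d x y = d y x) /\ (forall x y z, d x z <= d x y + d y z).

Definition complete : Prop :=
  forall u : nat -> U,
    (forall e, 0 < e -> exists N, forall m n, (N <= m)%nat -> (N <= n)%nat -> d (u m) (u n) < e) ->
    exists l, forall e, 0 < e -> exists N, forall n, (N <= n)%nat -> d (u n) l < e.

Definition curve_continuous (c : R -> U) : Prop :=
  forall s, 0 <= s <= 1 -> forall e, 0 < e -> exists del, 0 < del /\
    forall s', 0 <= s' <= 1 -> Rabs (s' - s) < del -> d (c s) (c s') < e.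

Fixpoint chain_len (c : R -> U) (x0 : R) (l : list R) : R :=
  match l with
  | nil => 0
  | x :: l' => d (c x0) (c x) + chain_len c x l'
  end.

Definition length_le (c : R -> U) (L : R) : Prop :=
  forall l : list R, Sorted Rle (0 :: l) -> Forall (fun x => x <= 1) l ->
    chain_len c 0 l <= L.

Definition length_space : Prop :=
  forall x y e, 0 < e -> exists c : R -> U,
    curve_continuous c /\ c 0 = x /\ c 1 = y /\ length_le c (d x y + e).

Definition geodesic (gamma : R -> U) (x y : U) : Prop :=
  gamma 0 = x /\ gamma (d x y) = y /\
  forall u v, 0 <= u <= d x y -> 0 <= v <= d x y -> d (gamma u) (gamma v) = Rabs (u - v).

(** distance in the model plane M^2_kappa from the vertex p~ to the point at
    distance y from q~ on the side [q~ r~], where |p~q~| = a, |p~r~| = b, |q~r~| = c *)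
Definition model_dist (kappa a b c y : R) : R :=
  if Req_EM_T c 0 then a else
  if Req_EM_T kappa 0 then
    sqrt (((c - y) * a ^ 2 + y * b ^ 2) / c - y * (c - y))
  else if Rlt_dec 0 kappa then
    let k := sqrt kappa in
    acos ((cos (k * a) * sin (k * (c - y)) + cos (k * b) * sin (k * y)) / sin (k * c)) / k
  else
    let k := sqrt (- kappa) in
    let z := (cosh (k * a) * sinh (k * (c - y)) + cosh (k * b) * sinh (k * y)) / sinh (k * c) in
    ln (z + sqrt (z ^ 2 - 1)) / k.

(** L < varpi_kappa  (varpi_kappa = pi / sqrt kappa if kappa > 0, +infinity otherwise) *)
Definition lt_varpi (kappa L : R) : Prop := kappa <= 0 \/ sqrt kappa * L < PI.

(** CAT(kappa): points at distance < varpi_kappa are joined by a geodesic, and every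
    geodesic triangle of perimeter < 2 varpi_kappa satisfies the point-on-side comparison *)
Definition CAT (kappa : R) : Prop :=
  (forall x y, lt_varpi kappa (d x y) -> exists g, geodesic g x y) /\
  (forall p q r g, geodesic g q r ->
     lt_varpi kappa ((d p q + d q r + d r p) / 2) ->
     forall y, 0 <= y <= d q r ->
       d p (g y) <= model_dist kappa (d p q) (d p r) (d q r) y).

Definition open_UR (Om : U -> R -> Prop) : Prop :=
  forall x t, Om x t -> exists r, 0 < r /\
    forall y s, d x y < r -> Rabs (s - t) < r -> Om y s.

Definition lambda_concave (lam : R) (f : U -> R) (D : U -> Prop) : Prop :=
  forall (sigma : R -> U) (u0 u1 : R),
    (forall u v, u0 <= u <= u1 -> u0 <= v <= u1 -> d (sigma u) (sigma v) = Rabs (u - v)) ->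
    (forall u, u0 <= u <= u1 -> D (sigma u)) ->
    forall x y th, u0 <= x <= u1 -> u0 <= y <= u1 -> 0 <= th <= 1 ->
      th * (f (sigma x) - lam / 2 * x ^ 2) + (1 - th) * (f (sigma y) - lam / 2 * y ^ 2)
      <= f (sigma (th * x + (1 - th) * y)) - lam / 2 * (th * x + (1 - th) * y) ^ 2.

(** family f_t, with Dom f_t = {x | Om x t}, is lambda-concave *)
Definition family_lambda_concave (lam : R) (f : R -> U -> R) (Om : U -> R -> Prop) : Prop :=
  forall t, lambda_concave lam (f t) (fun x => Om x t).

Definition right_deriv0 (F : R -> R) (L D : R) : Prop :=
  forall e, 0 < e -> exists del, 0 < del /\
    forall h, 0 < h -> h < del -> h <= L -> Rabs ((F h - F 0) / h - D) < e.

Definition gradient_curve (f : R -> U -> R) (Om : U -> R -> Prop)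
    (alpha : R -> U) (a b : R) : Prop :=
  (exists K, forall u v, a <= u < b -> a <= v < b -> d (alpha u) (alpha v) <= K * Rabs (u - v)) /\
  (forall t, a <= t < b -> Om (alpha t) t) /\
  (forall t p gamma, a <= t < b -> 0 < d (alpha t) p -> geodesic gamma (alpha t) p ->
     exists D, right_deriv0 (fun u => f t (gamma u)) (d (alpha t) p) D /\
       forall e, 0 < e -> exists del, 0 < del /\
         forall eps, 0 < eps -> eps < del -> t + eps < b ->
           d p (alpha (t + eps)) <= d p (alpha t) - eps * D + e * eps).

End Metric.

Definition deriv_within_Ico (g : R -> R) (a b t D : R) : Prop :=
  forall e, 0 < e -> exists del, 0 < del /\
    forall h, h <> 0 -> Rabs h < del -> a <= t + h < b ->
      Rabs ((g (t + h) - g t) / h - D) < e.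

(* Main.v *)
Require Import Defs.
From Stdlib Require Import Reals Lra.
Open Scope R_scope.

Lemma cont_eps (g : R -> R) x : continuity_pt g x -> forall e, 0 < e ->
  exists del, 0 < del /\ forall y, Rabs (y - x) < del -> Rabs (g y - g x) < e.
Proof.
  intros H e He. unfold continuity_pt, continue_in, limit1_in, limit_in in H.
  destruct (H e He) as [del [Hd Hy]]. exists del. split; auto.
  intros y Hyx. destruct (Req_dec y x) as [->|Hne].
  - rewrite Rminus_diag, Rabs_R0; auto.
  - apply (Hy y). split. unfold D_x, no_cond. split; auto.
    simpl. unfold R_dist. auto.
Qed.

Lemma lip_cont (g : R -> R) x K : 0 <= K ->
  (forall y, Rabs (g y - g x) <= K * Rabs (y - x)) -> continuity_pt g x.
Proof.
  intros HK H. unfold continuity_pt, continue_in, limit1_in, limit_in.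
  intros e He. exists (e / (K + 1)). split. apply Rdiv_lt_0_compat; lra.
  intros y [_ Hy]. simpl in *. unfold R_dist in *.
  eapply Rle_lt_trans. apply H.
  apply Rle_lt_trans with ((K+1) * Rabs (y - x)).
  apply Rmult_le_compat_r. apply Rabs_pos. lra.
  apply Rmult_lt_reg_l with (/ (K+1)). apply Rinv_0_lt_compat; lra.
  rewrite <- Rmult_assoc, Rinv_l by lra. rewrite Rmult_1_l.
  unfold Rdiv in Hy. lra.
Qed.

Lemma concave_deriv_lb (lam L D : R) (F : R -> R) :
 0 < L ->
 (forall x y th, 0<=x<=L -> 0<=y<=L -> 0<=th<=1 ->
    th*(F x - lam/2*x^2) + (1-th)*(F y - lam/2*y^2)
    <= F(th*x+(1-th)*y) - lam/2*(th*x+(1-th)*y)^2) ->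
 (forall e, 0<e -> exists del, 0<del /\ forall h, 0<h -> h<del -> h <= L/2 ->
    Rabs((F h - F 0)/h - D) < e) ->
 (F L - F 0)/L - lam*L/2 <= D.
Proof.
  intros HL Hc Hd.
  set (S := (F L - F 0)/L).
  destruct (Rle_or_lt (S - lam*L/2) D) as [|Hg]; auto. exfalso.
  set (g := S - lam*L/2 - D).
  assert (Hg0 : 0 < g) by (unfold g; lra).
  destruct (Hd (g/2)) as [del [Hdel Hh]]. lra.
  set (h := Rmin (del/2) (Rmin (L/2) (g/(2*(Rabs lam+1))))).
  assert (Hla : 0 <= Rabs lam) by apply Rabs_pos.
  assert (Hq : 0 < g/(2*(Rabs lam+1))) by (apply Rdiv_lt_0_compat; lra).
  assert (h1 : h <= del/2) by apply Rmin_l.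
  assert (h2 : h <= L/2) by (eapply Rle_trans; [apply Rmin_r|apply Rmin_l]).
  assert (h3 : h <= g/(2*(Rabs lam+1))) by (eapply Rle_trans; [apply Rmin_r|apply Rmin_r]).
  assert (h0 : 0 < h).
  { unfold h. apply Rmin_pos. lra. apply Rmin_pos; lra. }
  specialize (Hh h h0 ltac:(lra) h2).
  apply Rabs_def2 in Hh.
  set (q := (F h - F 0)/h) in Hh.
  assert (Hfh : F h = F 0 + q * h) by (unfold q; field; lra).
  assert (HFL : F L = F 0 + S * L) by (unfold S; field; lra).
  specialize (Hc L 0 (h/L) ltac:(lra) ltac:(lra)).
  assert (Hth : 0 <= h/L <= 1).
  { split. apply Rmult_le_pos; [lra| left; apply Rinv_0_lt_compat; lra].
    apply Rmult_le_reg_r with L; auto. unfold Rdiv. rewrite Rmult_assoc, Rinv_l; lra. }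
  specialize (Hc Hth).
  replace (h / L * L + (1 - h / L) * 0) with h in Hc by (field; lra).
  rewrite Hfh, HFL in Hc.
  assert (Hk : h * S - h * lam * L / 2 <= q * h - lam / 2 * h^2).
  { replace (h * S - h * lam * L / 2) with
      (h / L * (F 0 + S * L - lam / 2 * L ^ 2) + (1 - h / L) * (F 0 - lam / 2 * 0 ^ 2) - F 0)
      by (field; lra). lra. }
  assert (Hk2 : S - lam * L / 2 + lam * h / 2 <= q).
  { apply Rmult_le_reg_r with h; auto. nra. }
  assert (Hlh : - (Rabs lam * h) <= lam * h).
  { destruct (Rle_or_lt 0 lam). rewrite Rabs_right; nra. rewrite Rabs_left; nra. }
  assert (Hh3 : Rabs lam * h <= g/2).
  { apply Rle_trans with ((Rabs lam + 1) * h). nra.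
    apply Rle_trans with ((Rabs lam + 1) * (g / (2 * (Rabs lam + 1)))).
    apply Rmult_le_compat_l; lra. right; field; lra. }
  unfold g in *. lra.
Qed.

Lemma Rabs_le_between x y : Rabs x <= y -> -y <= x <= y.
Proof. intros H. destruct (Rle_or_lt 0 x). rewrite Rabs_right in H; lra. rewrite Rabs_left in H; lra. Qed.

Lemma mono_lemma (G : R -> R) a t0 : a <= t0 ->
  (forall x, continuity_pt G x) ->
  (forall t, a <= t < t0 -> forall e, 0 < e -> exists del, 0 < del /\
     forall eps, 0 < eps -> eps < del -> t + eps <= t0 -> G (t + eps) <= G t + e * eps) ->
  G t0 <= G a.
Proof.
  intros Ht0 Hc Hd.
  assert (Hall : forall e, 0 < e -> G t0 <= G a + e * (t0 - a)).
  { intros e He.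
    set (P := fun y => G y <= G a + e * (y - a)).
    set (E := fun x => a <= x <= t0 /\ forall y, a <= y <= x -> P y).
    assert (Hb : bound E) by (exists t0; intros x [Hx _]; lra).
    assert (Hne : exists x, E x).
    { exists a. split. lra. intros y Hy. replace y with a by lra. unfold P. lra. }
    destruct (completeness E Hb Hne) as [c [Hub Hlub]].
    assert (Hac : a <= c) by (apply Hub; destruct Hne; unfold E; split; [lra|]; intros y Hy;
      replace y with a by lra; unfold P; lra).
    assert (Hct : c <= t0) by (apply Hlub; intros x [Hx _]; lra).
    assert (Hbelow : forall y, a <= y < c -> P y).
    { intros y Hy. destruct (Classical_Prop.classic (exists x, E x /\ y <= x)) as [[x [[_ Hx] Hyx]]|Hn].
      apply Hx; lra.
      exfalso. assert (c <= y); [|lra]. apply Hlub. intros x Ex.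
      destruct (Rle_or_lt x y); auto. exfalso; apply Hn; exists x; split; auto; lra. }
    assert (HPc : P c).
    { destruct (Req_dec c a) as [->|Hca]. unfold P; lra.
      destruct (Rle_or_lt (G c) (G a + e * (c - a))) as [|Hgt]; auto. exfalso.
      destruct (cont_eps G c (Hc c) (G c - (G a + e * (c - a)))) as [del [Hdel Hy]]. lra.
      set (y := Rmax a (c - del/2)).
      assert (Hy1 : a <= y) by apply Rmax_l.
      assert (Hy2 : y < c) by (unfold y; apply Rmax_lub_lt; lra).
      assert (Hy3 : c - del/2 <= y) by apply Rmax_r.
      specialize (Hy y). assert (Rabs (y - c) < del) by (rewrite Rabs_left; lra).
      specialize (Hy H). apply Rabs_def2 in Hy. specialize (Hbelow y (conj Hy1 Hy2)).
      unfold P in Hbelow. nra. }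
    assert (HEc : forall y, a <= y <= c -> P y).
    { intros y Hy. destruct (Req_dec y c) as [->|]; auto. apply Hbelow; lra. }
    destruct (Req_dec c t0) as [<-|Hct']. apply HEc; lra.
    exfalso.
    destruct (Hd c ltac:(lra) e He) as [del [Hdel Hdd]].
    set (eps := Rmin (del/2) (t0 - c)).
    assert (eps <= del/2) by apply Rmin_l. assert (eps <= t0 - c) by apply Rmin_r.
    assert (0 < eps) by (apply Rmin_pos; lra).
    assert (E (c + eps)).
    { split. lra. intros y Hy. destruct (Rle_or_lt y c). apply HEc; lra.
      specialize (Hdd (y - c) ltac:(lra) ltac:(lra) ltac:(lra)).
      replace (c + (y - c)) with y in Hdd by ring. unfold P in *.
      specialize (HEc c ltac:(lra)). unfold P in HEc. nra. }
    specialize (Hub _ H2). lra. }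
  destruct (Req_dec t0 a) as [->|]. lra.
  destruct (Rle_or_lt (G t0) (G a)) as [|Hgt]; auto.
  specialize (Hall ((G t0 - G a) / (2 * (t0 - a)))).
  assert (0 < (G t0 - G a) / (2 * (t0 - a))) by (apply Rdiv_lt_0_compat; lra).
  specialize (Hall H0).
  replace ((G t0 - G a) / (2 * (t0 - a)) * (t0 - a)) with ((G t0 - G a)/2) in Hall by (field; lra).
  lra.
Qed.

Lemma prod_dini (v : R -> R) c a t b :
  (forall e, 0 < e -> exists del, 0 < del /\ forall eps, 0 < eps -> eps < del -> t + eps < b ->
     v (t + eps) <= v t + eps * c * v t + e * eps) ->
  forall e, 0 < e -> exists del, 0 < del /\ forall eps, 0 < eps -> eps < del -> t + eps < b ->
     v (t + eps) * exp (- c * (t + eps - a)) <= v t * exp (- c * (t - a)) + e * eps.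
Proof.
  intros Hv e He.
  set (E := exp (- c * (t - a))). assert (HE : 0 < E) by apply exp_pos.
  set (M := exp (Rabs c)). assert (HM : 0 < M) by apply exp_pos.
  set (V := Rabs (v t)). assert (HV : 0 <= V) by apply Rabs_pos.
  assert (Hc : 0 <= Rabs c) by apply Rabs_pos.
  destruct (Hv (e / (2 * (E * M)))) as [d1 [Hd1 H1]].
  { apply Rdiv_lt_0_compat; [lra|]. apply Rmult_lt_0_compat; [lra|]. apply Rmult_lt_0_compat; lra. }
  set (d := Rmin d1 (Rmin 1 (Rmin (1 / (2 * (Rabs c + 1))) (e / (2 * (E * V * (c*c) + 1)))))).
  assert (Hcc : 0 <= c * c) by nra.
  assert (HEV : 0 <= E * V * (c*c)) by (apply Rmult_le_pos; [apply Rmult_le_pos|]; lra).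
  exists d. split.
  { unfold d. repeat apply Rmin_pos; try lra; apply Rdiv_lt_0_compat; lra. }
  intros eps Heps Hed Htb.
  assert (e1 : eps < d1) by (eapply Rlt_le_trans; [apply Hed| apply Rmin_l]).
  assert (e2 : eps < 1) by (eapply Rlt_le_trans; [apply Hed| unfold d; eapply Rle_trans; [apply Rmin_r|apply Rmin_l]]).
  assert (e3 : eps < 1 / (2 * (Rabs c + 1))) by (eapply Rlt_le_trans; [apply Hed| unfold d; eapply Rle_trans; [apply Rmin_r|eapply Rle_trans; [apply Rmin_r|apply Rmin_l]]]).
  assert (e4 : eps < e / (2 * (E * V * (c*c) + 1))) by (eapply Rlt_le_trans; [apply Hed| unfold d; eapply Rle_trans; [apply Rmin_r|eapply Rle_trans; [apply Rmin_r|apply Rmin_r]]]).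
  specialize (H1 eps Heps e1 Htb).
  set (X := exp (- c * eps)). assert (HX : 0 < X) by apply exp_pos.
  assert (Hsplit : exp (- c * (t + eps - a)) = E * X).
  { unfold E, X. rewrite <- exp_plus. f_equal. ring. }
  rewrite Hsplit. fold E.
  assert (Hce : Rabs (c * eps) <= 1/2).
  { rewrite Rabs_mult, (Rabs_right eps) by lra.
    apply Rle_trans with (Rabs c * (1 / (2 * (Rabs c + 1)))). apply Rmult_le_compat_l; lra.
    apply Rmult_le_reg_r with (2 * (Rabs c + 1)). lra.
    replace (Rabs c * (1 / (2 * (Rabs c + 1))) * (2 * (Rabs c + 1))) with (Rabs c) by (field; lra). lra. }
  assert (Hce2 : -(1/2) <= c * eps <= 1/2).
  { destruct (Rle_or_lt 0 (c*eps)); [rewrite Rabs_right in Hce; lra | rewrite Rabs_left in Hce; lra]. }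
  assert (HXu : (1 + c * eps) * X <= 1).
  { pose proof (exp_ineq1_le (c * eps)). unfold X.
    replace (- c * eps) with (- (c * eps)) by ring. rewrite exp_Ropp.
    apply Rmult_le_reg_r with (exp (c * eps)). apply exp_pos.
    rewrite Rmult_assoc, Rinv_l by (apply Rgt_not_eq, exp_pos). lra. }
  assert (HXl : 1 - (c*eps)^2 <= (1 + c * eps) * X).
  { pose proof (exp_ineq1_le (- c * eps)). fold X in H.
    replace (1 - (c*eps)^2) with ((1 + c*eps) * (1 + - c * eps)) by ring.
    apply Rmult_le_compat_l; lra. }
  assert (HXM : X <= M).
  { unfold X, M. assert (Hle : - c * eps <= Rabs c).
    { destruct (Rle_or_lt 0 c). rewrite Rabs_right by lra. nra. rewrite Rabs_left by lra. nra. }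
    destruct Hle as [Hlt|Heq]. left; apply exp_increasing; auto. rewrite Heq; lra. }
  assert (Hvw : v t * ((1 + c * eps) * X) <= v t + V * (c*c) * (eps * eps)).
  { unfold V. destruct (Rle_or_lt 0 (v t)).
    rewrite Rabs_right by lra. nra. rewrite Rabs_left by lra. nra. }
  assert (Hstep : v (t + eps) * (E * X) <= (v t + eps * c * v t + e / (2 * (E * M)) * eps) * (E * X)).
  { apply Rmult_le_compat_r. apply Rmult_le_pos; lra. auto. }
  eapply Rle_trans. apply Hstep.
  replace ((v t + eps * c * v t + e / (2 * (E * M)) * eps) * (E * X))
    with (E * (v t * ((1 + c * eps) * X)) + e / (2 * (E * M)) * eps * (E * X)) by ring.
  assert (Ht1 : E * (v t * ((1 + c * eps) * X)) <= v t * E + E * V * (c*c) * (eps * eps)).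
  { apply Rle_trans with (E * (v t + V * (c*c) * (eps * eps))). apply Rmult_le_compat_l; lra.
    right; ring. }
  assert (Ht2 : E * V * (c*c) * (eps * eps) <= e / 2 * eps).
  { apply Rle_trans with ((E * V * (c*c) + 1) * eps * eps). nra.
    apply Rle_trans with ((E * V * (c*c) + 1) * (e / (2 * (E * V * (c*c) + 1))) * eps).
    apply Rmult_le_compat_r. lra. apply Rmult_le_compat_l; lra.
    right; field; lra. }
  assert (Ht3 : e / (2 * (E * M)) * eps * (E * X) <= e / 2 * eps).
  { apply Rle_trans with (e / (2 * (E * M)) * eps * (E * M)).
    apply Rmult_le_compat_l. apply Rmult_le_pos; [left; apply Rdiv_lt_0_compat; [lra|]; apply Rmult_lt_0_compat; [lra|]; apply Rmult_lt_0_compat; lra | lra].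
    apply Rmult_le_compat_l; lra.
    right; field; lra. }
  lra.
Qed.

Lemma core_dini (U : Type) (d : U -> U -> R) (lam s : R)
  (Om : U -> R -> Prop) (f h : R -> U -> R) (alpha beta : R -> U) (a b : R) :
  is_metric d ->
  family_lambda_concave d lam f Om ->
  family_lambda_concave d lam h Om ->
  (forall x t, Om x t -> Rabs (f t x - h t x) <= s) ->
  gradient_curve d f Om alpha a b ->
  gradient_curve d h Om beta a b ->
  (forall t, a <= t < b -> exists gamma, geodesic d gamma (alpha t) (beta t) /\
      forall u, 0 <= u <= d (alpha t) (beta t) -> Om (gamma u) t) ->
  forall t, a <= t < b -> 0 < d (alpha t) (beta t) ->
  forall e, 0 < e -> exists del, 0 < del /\ forall eps, 0 < eps -> eps < del -> t + eps < b ->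
   d (alpha (t+eps)) (beta (t+eps)) <= d (alpha t) (beta t)
       + eps * (lam * d (alpha t) (beta t) + 2 * s / d (alpha t) (beta t)) + e * eps.
Proof.
  intros [Hpos [Hzero [Hsym Htri]]] Hcf Hch Hfh [_ [HOa Ga]] [_ [HOb Gb]] Hgeo t Ht HL e He.
  destruct (Hgeo t Ht) as [g [[Hg0 [HgL Hiso]] HOm]].
  set (L := d (alpha t) (beta t)) in *.
  set (m := g (L/2)).
  assert (dam : d (alpha t) m = L/2).
  { unfold m. rewrite <- Hg0. rewrite Hiso by lra. rewrite Rabs_left by lra. lra. }
  assert (dbm : d (beta t) m = L/2).
  { unfold m. rewrite <- HgL. rewrite Hiso by lra. rewrite Rabs_right by lra. lra. }
  assert (geoa : geodesic d g (alpha t) m).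
  { split; auto. rewrite dam. split; auto. intros u v Hu Hv. apply Hiso; lra. }
  set (sg := fun u => g (L - u)).
  assert (geob : geodesic d sg (beta t) m).
  { split. unfold sg. rewrite Rminus_0_r; auto. rewrite dbm. split.
    unfold sg, m. replace (L - L/2) with (L/2) by field. reflexivity.
    intros u v Hu Hv. unfold sg. rewrite Hiso by lra. replace (L - u - (L - v)) with (v - u) by ring. apply Rabs_minus_sym. }
  destruct (Ga t m g Ht ltac:(lra) geoa) as [D1 [HD1 Hd1]].
  destruct (Gb t m sg Ht ltac:(lra) geob) as [D2 [HD2 Hd2]].
  assert (lb1 : (f t (g L) - f t (g 0)) / L - lam * L / 2 <= D1).
  { apply (concave_deriv_lb lam L D1 (fun u => f t (g u))); auto.
    - intros x y th Hx Hy Hth. apply (Hcf t g 0 L); auto; intros u v Hu Hv; apply Hiso; lra.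
    - rewrite dam in HD1. exact HD1. }
  assert (lb2 : (h t (sg L) - h t (sg 0)) / L - lam * L / 2 <= D2).
  { apply (concave_deriv_lb lam L D2 (fun u => h t (sg u))); auto.
    - intros x y th Hx Hy Hth. apply (Hch t sg 0 L); auto.
      intros u v Hu Hv. unfold sg. rewrite Hiso by lra. replace (L - u - (L - v)) with (v - u) by ring. apply Rabs_minus_sym.
      intros u Hu. unfold sg. apply HOm. lra.
    - rewrite dbm in HD2. exact HD2. }
  unfold sg in lb2. rewrite Rminus_diag, Rminus_0_r in lb2.
  fold L in HgL. rewrite Hg0, HgL in lb1. rewrite Hg0, HgL in lb2.
  assert (Hs1 := Hfh _ _ (HOa t Ht)). assert (Hs2 := Hfh _ _ (HOb t Ht)).
  apply Rabs_le_between in Hs1. apply Rabs_le_between in Hs2.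
  assert (Hsum : D1 + D2 >= - (lam * L) - 2 * s / L).
  { assert (Hq : (f t (beta t) - f t (alpha t)) / L + (h t (alpha t) - h t (beta t)) / L
      = ((f t (beta t) - h t (beta t)) - (f t (alpha t) - h t (alpha t))) * / L) by (field; lra).
    assert (Hq2 : - (2 * s) * / L <= ((f t (beta t) - h t (beta t)) - (f t (alpha t) - h t (alpha t))) * / L).
    { apply Rmult_le_compat_r. left; apply Rinv_0_lt_compat; lra. lra. }
    assert (Hq3 : - (2 * s) * / L = - (2 * s / L)) by (unfold Rdiv; ring).
    lra. }
  destruct (Hd1 (e/2) ltac:(lra)) as [d1 [Hd1p H1]].
  destruct (Hd2 (e/2) ltac:(lra)) as [d2 [Hd2p H2]].
  exists (Rmin d1 d2). split. apply Rmin_pos; auto.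
  intros eps He0 Hed Htb.
  assert (eps < d1) by (eapply Rlt_le_trans; [apply Hed|apply Rmin_l]).
  assert (eps < d2) by (eapply Rlt_le_trans; [apply Hed|apply Rmin_r]).
  specialize (H1 eps He0 H Htb). specialize (H2 eps He0 H0 Htb).
  rewrite Hsym in dam, dbm. rewrite dam in H1. rewrite dbm in H2.
  pose proof (Htri (alpha (t+eps)) m (beta (t+eps))) as T.
  rewrite (Hsym (alpha (t+eps)) m) in T.
  assert (eps * (D1 + D2) >= eps * (- (lam * L) - 2 * s / L)).
  { apply Rle_ge, Rmult_le_compat_l; lra. }
  nra.
Qed.

Lemma sq_dini (l : R -> R) lam s K a b t : 0 <= s -> 0 <= K -> (forall x, 0 <= l x) -> a <= t < b ->
  (forall u, a <= u < b -> Rabs (l u - l t) <= K * Rabs (u - t)) ->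
  (0 < l t -> forall e, 0 < e -> exists del, 0 < del /\ forall eps, 0 < eps -> eps < del -> t + eps < b ->
     l (t+eps) <= l t + eps * (lam * l t + 2 * s / l t) + e * eps) ->
  forall e, 0 < e -> exists del, 0 < del /\ forall eps, 0 < eps -> eps < del -> t + eps < b ->
     l (t+eps) * l (t+eps) <= l t * l t + eps * (2 * lam) * (l t * l t) + 4 * s * eps + e * eps.
Proof.
  intros Hs HK Hl Ht Hlip Hcore e He.
  destruct (Rle_or_lt (l t) 0) as [Hz|Hp].
  - assert (Hz0 : l t = 0) by (specialize (Hl t); lra).
    assert (HKK : 0 <= K*K) by (apply Rmult_le_pos; lra).
    exists (e / (K*K + 1)). split. apply Rdiv_lt_0_compat; lra.
    intros eps He0 Hed Htb.
    specialize (Hlip (t+eps) ltac:(lra)). rewrite Hz0, Rminus_0_r in Hlip.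
    replace (t + eps - t) with eps in Hlip by ring. rewrite (Rabs_right eps) in Hlip by lra.
    rewrite Rabs_right in Hlip by (apply Rle_ge, Hl).
    rewrite Hz0.
    assert (Hq : eps * (K*K + 1) < e).
    { apply Rmult_lt_reg_r with (/ (K*K+1)). apply Rinv_0_lt_compat; lra.
      rewrite Rmult_assoc, Rinv_r by lra. unfold Rdiv in Hed. lra. }
    pose proof (Hl (t+eps)). nra.
  - set (A := lam * l t + 2 * s / l t).
    set (e1 := e / (4 * (l t + 1))).
    assert (He1 : 0 < e1) by (apply Rdiv_lt_0_compat; lra).
    destruct (Hcore Hp e1 He1) as [d1 [Hd1 H1]].
    set (B := (A + e1) * (A + e1) + 1).
    assert (HB : 0 < B) by (unfold B; pose proof (Rle_0_sqr (A+e1)); unfold Rsqr in *; lra).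
    exists (Rmin d1 (e / (2 * B))). split. apply Rmin_pos; auto. apply Rdiv_lt_0_compat; lra.
    intros eps He0 Hed Htb.
    assert (eps < d1) by (eapply Rlt_le_trans; [apply Hed|apply Rmin_l]).
    assert (Hq0 : eps < e / (2 * B)) by (eapply Rlt_le_trans; [apply Hed|apply Rmin_r]).
    specialize (H1 eps He0 H Htb). fold A in H1.
    pose proof (Hl (t+eps)) as Hn.
    assert (Hsq : l (t+eps) * l (t+eps) <= (l t + eps * (A + e1)) * (l t + eps * (A + e1))).
    { apply Rmult_le_compat; lra. }
    assert (H2A : 2 * l t * A = 2 * lam * (l t * l t) + 4 * s) by (unfold A; field; lra).
    assert (Hq : eps * B < e / 2).
    { apply Rmult_lt_reg_r with (/ B). apply Rinv_0_lt_compat; lra.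
      rewrite Rmult_assoc, Rinv_r by lra. unfold Rdiv in Hq0.
      replace (e / 2 * / B) with (e * / (2 * B)) by (field; lra). lra. }
    assert (Hq2 : 2 * l t * e1 <= e / 2).
    { unfold e1. apply Rle_trans with (e / 2 * (l t / (l t + 1))).
      right; field; lra.
      assert (l t / (l t + 1) <= 1).
      { apply Rmult_le_reg_r with (l t + 1). lra. unfold Rdiv. rewrite Rmult_assoc, Rinv_l; lra. }
      nra. }
    assert (Hq3 : eps * eps * ((A + e1) * (A + e1)) <= eps * (e/2)).
    { apply Rle_trans with (eps * (eps * B)). unfold B. nra. apply Rmult_le_compat_l; lra. }
    nra.
Qed.

Lemma final_ineq (l : R -> R) lam s K a b c m : 0 <= s -> 0 <= K -> (forall x, 0 <= l x) ->
  c = 2 * lam -> c * m = 4 * s ->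
  (forall u v, a <= u < b -> a <= v < b -> Rabs (l u - l v) <= K * Rabs (u - v)) ->
  (forall t, a <= t < b -> 0 < l t -> forall e, 0 < e -> exists del, 0 < del /\ forall eps, 0 < eps -> eps < del -> t + eps < b ->
     l (t+eps) <= l t + eps * (lam * l t + 2 * s / l t) + e * eps) ->
  forall t0, a <= t0 < b -> (l t0 * l t0 + m) * exp (- c * (t0 - a)) <= l a * l a + m.
Proof.
  intros Hs HK Hl Hc Hcm Hlip Hcore t0 Ht0.
  set (cl := fun x => Rmax a (Rmin x t0)).
  assert (Hcl : forall x, a <= cl x <= t0).
  { intros x. unfold cl. split. apply Rmax_l. apply Rmax_lub. lra. apply Rmin_r. }
  assert (Hcl1 : forall x y, Rabs (cl y - cl x) <= Rabs (y - x)).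
  { intros x y. pose proof (Rle_abs (y - x)). pose proof (Rle_abs (- (y - x))).
    rewrite Rabs_Ropp in H0. apply Rabs_le. unfold cl, Rmax, Rmin.
    repeat destruct Rle_dec; lra. }
  assert (Hcl2 : forall x, a <= x <= t0 -> cl x = x).
  { intros x Hx. unfold cl. rewrite Rmin_left by lra. rewrite Rmax_right by lra. auto. }
  set (lt' := fun x => l (cl x)).
  set (G := fun x => (lt' x * lt' x + m) * exp (- c * (x - a))).
  assert (HG : G t0 <= G a).
  { apply mono_lemma. lra.
    - intros x. unfold G.
      assert (Hlc : continuity_pt lt' x).
      { apply lip_cont with K; auto. intros y. unfold lt'.
        eapply Rle_trans. apply Hlip; pose proof (Hcl x); pose proof (Hcl y); lra.
        apply Rmult_le_compat_l; auto. }
      apply (continuity_pt_mult (fun x => lt' x * lt' x + m) (fun x => exp (- c * (x - a)))).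
      apply (continuity_pt_plus (fun x => lt' x * lt' x) (fun _ => m)).
      apply (continuity_pt_mult lt' lt'); auto.
      apply continuity_pt_const. intros u v; reflexivity.
      apply (continuity_pt_comp (fun x => - c * (x - a)) exp).
      apply lip_cont with (Rabs c). apply Rabs_pos. intros y.
      replace (- c * (y - a) - - c * (x - a)) with (-c * (y - x)) by ring.
      rewrite Rabs_mult, Rabs_Ropp. lra.
      apply derivable_continuous_pt, derivable_pt_exp.
    - intros t Ht e He.
      assert (Htb : a <= t < b) by lra.
      assert (Hsq := sq_dini l lam s K a b t Hs HK Hl Htb
                 (fun u Hu => Hlip u t Hu Htb) (Hcore t Htb)).
      assert (Hv : forall e, 0 < e -> exists del, 0 < del /\ forall eps, 0 < eps -> eps < del -> t + eps < b ->
                 (fun x => l x * l x + m) (t + eps) <= (fun x => l x * l x + m) t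
                    + eps * c * ((fun x => l x * l x + m) t) + e * eps).
      { intros e' He'. destruct (Hsq e' He') as [del [Hdel H]]. exists del. split; auto.
        intros eps H1 H2 H3. specialize (H eps H1 H2 H3). simpl.
        replace (l t * l t + m + eps * c * (l t * l t + m)) with
          (l t * l t + eps * (2 * lam) * (l t * l t) + eps * (c * m) + m) by (rewrite Hc; ring).
        rewrite Hcm. lra. }
      destruct (prod_dini _ c a t b Hv e He) as [del [Hdel H]].
      exists del. split; auto. intros eps H1 H2 H3.
      specialize (H eps H1 H2 ltac:(lra)). simpl in H. unfold G, lt'.
      rewrite !Hcl2 by lra. exact H. }
  unfold G, lt' in HG. rewrite !Hcl2 in HG by lra.
  replace (- c * (a - a)) with 0 in HG by ring. rewrite exp_0, Rmult_1_r in HG. exact HG.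
Qed.

Theorem mainTheorem7 (U : Type) (d : U -> U -> R) (kappa lam s : R)
  (Om : U -> R -> Prop) (f h : R -> U -> R) (alpha beta : R -> U) (a b : R) :
  is_metric d -> complete d -> length_space d -> CAT d kappa ->
  0 <= s ->
  open_UR d Om ->
  family_lambda_concave d lam f Om ->
  family_lambda_concave d lam h Om ->
  (forall x t, Om x t -> Rabs (f t x - h t x) <= s) ->
  gradient_curve d f Om alpha a b ->
  gradient_curve d h Om beta a b ->
  (forall t, a <= t < b -> exists gamma, geodesic d gamma (alpha t) (beta t) /\
      forall u, 0 <= u <= d (alpha t) (beta t) -> Om (gamma u) t) ->
  let l := fun t => d (alpha t) (beta t) in
  (forall t D, a <= t < b -> deriv_within_Ico l a b t D -> 0 < l t ->
      D <= lam * l t + 2 * s / l t) /\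
  (lam <> 0 -> forall t, a <= t < b ->
      l t ^ 2 + 2 * s / lam <= (l a ^ 2 + 2 * s / lam) * exp (2 * lam * (t - a))) /\
  ((forall x t, Om x t -> f t x = h t x) -> forall t, a <= t < b ->
      l t <= l a * exp (lam * (t - a))).
Proof.
  intros Hm _ _ _ Hs _ Hcf Hch Hfh Ga Gb Hgeo l.
  pose proof Hm as [Hpos [Hzero [Hsym Htri]]].
  assert (Hcore := core_dini U d lam s Om f h alpha beta a b Hm Hcf Hch Hfh Ga Gb Hgeo).
  assert (Hl : forall x, 0 <= l x) by (intros; apply Hpos).
  destruct Ga as [[K1 HK1] Ga']. destruct Gb as [[K2 HK2] Gb'].
  set (K := Rabs K1 + Rabs K2).
  assert (HK : 0 <= K) by (unfold K; pose proof (Rabs_pos K1); pose proof (Rabs_pos K2); lra).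
  assert (Hlip : forall u v, a <= u < b -> a <= v < b -> Rabs (l u - l v) <= K * Rabs (u - v)).
  { intros u v Hu Hv. unfold l.
    assert (Ha := HK1 u v Hu Hv). assert (Hb := HK2 u v Hu Hv).
    assert (Ha' : K1 * Rabs (u - v) <= Rabs K1 * Rabs (u - v)) by
      (apply Rmult_le_compat_r; [apply Rabs_pos| apply Rle_abs]).
    assert (Hb' : K2 * Rabs (u - v) <= Rabs K2 * Rabs (u - v)) by
      (apply Rmult_le_compat_r; [apply Rabs_pos| apply Rle_abs]).
    pose proof (Htri (alpha u) (alpha v) (beta u)).
    pose proof (Htri (alpha v) (beta v) (beta u)).
    pose proof (Htri (alpha v) (alpha u) (beta v)).
    pose proof (Htri (alpha u) (beta u) (beta v)).
    rewrite (Hsym (beta v) (beta u)) in *. rewrite (Hsym (alpha v) (alpha u)) in *.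
    apply Rabs_le. unfold K. lra. }
  split; [|split].
  - intros t D Ht Hder Hlt.
    destruct (Rle_or_lt D (lam * l t + 2 * s / l t)) as [|HD]; auto. exfalso.
    set (A := lam * l t + 2 * s / l t) in *.
    set (e := (D - A) / 2).
    destruct (Hcore t Ht Hlt e ltac:(unfold e; lra)) as [d1 [Hd1 H1]].
    destruct (Hder e ltac:(unfold e; lra)) as [d2 [Hd2 H2]].
    set (eps := Rmin d1 (Rmin d2 (b - t)) / 2).
    assert (Hm0 : 0 < Rmin d1 (Rmin d2 (b - t))) by (repeat apply Rmin_pos; lra).
    assert (Rmin d1 (Rmin d2 (b - t)) <= d1) by apply Rmin_l.
    assert (Rmin d1 (Rmin d2 (b - t)) <= d2) by (eapply Rle_trans; [apply Rmin_r|apply Rmin_l]).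
    assert (Rmin d1 (Rmin d2 (b - t)) <= b - t) by (eapply Rle_trans; [apply Rmin_r|apply Rmin_r]).
    assert (Hep : 0 < eps) by (unfold eps; lra).
    specialize (H1 eps Hep ltac:(unfold eps; lra) ltac:(unfold eps; lra)).
    specialize (H2 eps ltac:(lra) ltac:(rewrite Rabs_right; unfold eps; lra) ltac:(unfold eps; lra)).
    apply Rabs_def2 in H2. destruct H2 as [_ H2].
    change (l (t + eps) <= l t + eps * A + e * eps) in H1.
    assert (Hq : (l (t + eps) - l t) / eps <= A + e).
    { apply Rmult_le_reg_r with eps; auto. unfold Rdiv. rewrite Rmult_assoc, Rinv_l, Rmult_1_r by lra. lra. }
    unfold e in *. lra.
  - intros Hlam t Ht.
    assert (Hf := final_ineq l lam s K a b (2 * lam) (2 * s / lam) Hs HK Hl eq_refl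
                  ltac:(field; auto) Hlip Hcore t Ht).
    assert (He : exp (- (2 * lam) * (t - a)) * exp (2 * lam * (t - a)) = 1).
    { rewrite <- exp_plus. replace (- (2 * lam) * (t - a) + 2 * lam * (t - a)) with 0 by ring. apply exp_0. }
    pose proof (exp_pos (2 * lam * (t - a))).
    apply Rmult_le_compat_r with (r := exp (2 * lam * (t - a))) in Hf; [|lra].
    rewrite Rmult_assoc, He, Rmult_1_r in Hf. simpl. rewrite !Rmult_1_r. exact Hf.
  - intros Heq t Ht.
    assert (Hfh0 : forall x t, Om x t -> Rabs (f t x - h t x) <= 0).
    { intros x t' Hx. rewrite Heq by auto. rewrite Rminus_diag, Rabs_R0. lra. }
    assert (Hcore0 := core_dini U d lam 0 Om f h alpha beta a b Hm Hcf Hch Hfh0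
                        (conj (ex_intro _ K1 HK1) Ga') (conj (ex_intro _ K2 HK2) Gb') Hgeo).
    assert (Hf := final_ineq l lam 0 K a b (2 * lam) 0 ltac:(lra) HK Hl eq_refl
                  ltac:(ring) Hlip Hcore0 t Ht).
    rewrite !Rplus_0_r in Hf.
    set (X := exp (lam * (t - a))).
    assert (HX : 0 < X) by apply exp_pos.
    assert (HE : exp (- (2 * lam) * (t - a)) * (X * X) = 1).
    { unfold X. rewrite <- !exp_plus. replace (- (2 * lam) * (t - a) + (lam * (t - a) + lam * (t - a))) with 0 by ring. apply exp_0. }
    apply Rmult_le_compat_r with (r := X * X) in Hf; [|nra].
    rewrite Rmult_assoc, HE, Rmult_1_r in Hf.
    pose proof (Hl t). pose proof (Hl a).
    destruct (Rle_or_lt (l t) (l a * X)); auto.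
    exfalso. assert (H5 : 0 <= l a * X) by (apply Rmult_le_pos; lra).
    replace (l a * l a * (X * X)) with ((l a * X) * (l a * X)) in Hf by ring.
    assert (l a * X * (l a * X) < l t * l t).
    { apply Rle_lt_trans with (l a * X * l t). apply Rmult_le_compat_l; lra.
      apply Rmult_lt_compat_r; lra. }
    lra.
Qed.
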